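(* Let $\mathscr H$ be a Hilbert module over $A=M_d(\mathbb C)$. If $S\in\mathscr F(\mathscr H)$ is self-adjoint (with respect to the Hilbert space inner product $\operatorname{tr}[\cdot,\cdot]$), then there exist $\lambda_1,\dots,\lambda_n\in\mathbb R$ and a modular orthonormal family $\{f_1,\dots,f_n\}\subset\mathscr H$ such that $S=\sum_{k=1}^n\lambda_k\, f_k\odot f_k$.
   Context: A Hilbert module over $A=M_d(\mathbb C)$ is a left $A$-module $\mathscr H$ with a map $[\cdot,\cdot]:\mathscr H\times\mathscr H\to A$ such that for all $f,g,h\in\mathscr H$, $a\in A$: $[f+g,h]=[f,h]+[g,h]$; $[af,g]=a[f,g]$; $[g,f]=[f,g]^*$; $[f,f]\ge0$, and $[f,f]=0$ iff $f=0$; and $\mathscr H$ is complete in the norm $f\mapsto\|[f,f]\|^{1/2}$ (equivalently, $\mathscr H$ is a Hilbert space with inner product $\operatorname{tr}[f,g]$). For $f,g\in\mathscr H$, $f\odot g$ is the operator $h\mapsto[h,g]f$, and $\mathscr F(\mathscr H)=\{\sum_{k=1}^n f_k\odot g_k: n\in\mathbb N,\ f_k,g_k\in\mathscr H\}$. A family $\{f_k\}\subset\mathscr H$ is modular orthonormal if $[f_j,f_k]=0$ for $j\ne k$ and each $[f_k,f_k]$ is a minimal (rank-one) projection in $A$. *)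

(* Defs.v *)
From HB Require Import structures.
From mathcomp Require Import all_boot all_order all_algebra.
From mathcomp Require Import complex.
From mathcomp Require Import reals.
Set Implicit Arguments. Unset Strict Implicit. Unset Printing Implicit Defensive.
Import Order.TTheory GRing.Theory Num.Theory.
Local Open Scope ring_scope.
Local Open Scope complex_scope.

Section HilbertModule.
Variables (R : realType) (d : nat) (H : zmodType).
Local Notation C := (R[i]).
Local Notation A := ('M[C]_d).

Definition adjmx (a : A) : A := (map_mx Num.conj a)^T.

Definition psd_mx (a : A) : Prop :=
  adjmx a = a /\
  forall v : 'cV[C]_d, 0 <= ((map_mx Num.conj v)^T *m a *m v) 0 0.

Definition minimal_projection (p : A) : Prop :=
  p *m p = p /\ adjmx p = p /\ \rank p = 1%N.

Variables (act : A -> H -> H) (ip : H -> H -> A).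

Definition left_module : Prop :=
  [/\ forall a f g, act a (f + g) = act a f + act a g,
      forall a b f, act (a + b) f = act a f + act b f,
      forall a b f, act (a *m b) f = act a (act b f) &
      forall f, act 1%:M f = f].

(* completeness for the norm f |-> (tr [f,f])^(1/2)
   (equivalent to the norm f |-> ||[f,f]||^(1/2)); stated with squared norms *)
Definition complete_module : Prop :=
  forall u : nat -> H,
    (forall e : R, 0 < e -> exists N : nat, forall m n : nat, (N <= m)%N -> (N <= n)%N ->
        \tr (ip (u m - u n) (u m - u n)) < e%:C) ->
    exists f : H, forall e : R, 0 < e -> exists N : nat, forall n : nat, (N <= n)%N ->
        \tr (ip (u n - f) (u n - f)) < e%:C.

Definition hilbert_module : Prop :=
  left_module /\
  (forall f g h, ip (f + g) h = ip f h + ip g h) /\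
  (forall a f g, ip (act a f) g = a *m ip f g) /\
  (forall f g, ip g f = adjmx (ip f g)) /\
  (forall f, psd_mx (ip f f)) /\
  (forall f, ip f f = 0 <-> f = 0) /\
  complete_module.

Definition odot (f g : H) : H -> H := fun h => act (ip h g) f.

Definition in_finite_rank (S : H -> H) : Prop :=
  exists (n : nat) (fs gs : 'I_n -> H),
    forall h, S h = \sum_(k < n) odot (fs k) (gs k) h.

Definition self_adjoint (S : H -> H) : Prop :=
  forall h h', \tr (ip (S h) h') = \tr (ip h (S h')).

Definition modular_orthonormal (n : nat) (f : 'I_n -> H) : Prop :=
  (forall j k : 'I_n, j != k -> ip (f j) (f k) = 0) /\
  (forall k : 'I_n, minimal_projection (ip (f k) (f k))).

End HilbertModule.

(* Main.v *)
Require Import Defs.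
From HB Require Import structures.
From mathcomp Require Import all_boot all_order all_algebra.
From mathcomp Require Import complex.
From mathcomp Require Import reals.
From mathcomp Require Import spectral sesquilinear.
From mathcomp Require Import ring lra.
Set Implicit Arguments. Unset Strict Implicit. Unset Printing Implicit Defensive.
Import Order.TTheory GRing.Theory Num.Theory.
Local Open Scope ring_scope.


Lemma mul_delta_l (R : pzRingType) m n p (i : 'I_m) (j : 'I_n) (M : 'M[R]_(n, p)) :
  delta_mx i j *m M = \matrix_(a, b) ((a == i)%:R * M j b).
Proof.
apply/matrixP => a b; rewrite !mxE (bigD1 j) //= big1 ?addr0.
  by rewrite !mxE eqxx andbT.
by move=> c /negPf cj; rewrite !mxE cj andbF mul0r.
Qed.
Lemma sandwich (R : comPzRingType) m n p q (i : 'I_m) (j : 'I_n) (k : 'I_p) (l : 'I_q)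
  (M : 'M[R]_(n, p)) :
  delta_mx i j *m M *m delta_mx k l = M j k *: delta_mx i l.
Proof.
rewrite mul_delta_l; apply/matrixP => a b; rewrite !mxE (bigD1 k) //= big1 ?addr0.
  by rewrite !mxE eqxx /= -mulnb natrM mulrAC mulrC.
by move=> c /negPf ck; rewrite !mxE ck mulr0.
Qed.

Lemma Creal_C (R : realType) (x : R[i]) : x^* = x -> ((complex.Re x)%:C)%C = x.
Proof. case: x => a b /= [] hb; have -> : b = 0 by lra. by []. Qed.

Section Core.
Variables (R : realType) (d' : nat) (H : zmodType).
Local Notation C := (R[i]).
Local Notation d := d'.+1.
Variables (act : 'M[C]_d -> H -> H) (ip : H -> H -> 'M[C]_d).
Hypothesis hH : hilbert_module act ip.

Lemma actDr a f g : act a (f + g) = act a f + act a g.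
Proof. by case: hH => [[]]. Qed.
Lemma actDl a b f : act (a + b) f = act a f + act b f.
Proof. by case: hH => [[]]. Qed.
Lemma actM a b f : act (a *m b) f = act a (act b f).
Proof. by case: hH => [[]]. Qed.
Lemma act1 f : act 1%:M f = f.
Proof. by case: hH => [[]]. Qed.
Lemma ipDl f g h : ip (f + g) h = ip f h + ip g h.
Proof. by case: hH => _ []. Qed.
Lemma ipAl a f g : ip (act a f) g = a *m ip f g.
Proof. by case: hH => _ [_ []]. Qed.
Lemma ipC f g : ip g f = adjmx (ip f g).
Proof. by case: hH => _ [_ [_ []]]. Qed.
Lemma ip_psd f : psd_mx (ip f f).
Proof. by case: hH => _ [_ [_ [_ []]]]. Qed.
Lemma ip_eq0 f : ip f f = 0 -> f = 0.
Proof. by case: hH => _ [_ [_ [_ [_ [H1 _]]]]]; case: (H1 f). Qed.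

Lemma act0r a : act a 0 = 0.
Proof. by by apply: (@addrI _ (act a 0)); rewrite -actDr !addr0. Qed.

Lemma act0l f : act 0 f = 0.
Proof. apply: (@addrI _ (act 0 f)); by rewrite -actDl !addr0. Qed.
Lemma actNr a f : act a (- f) = - act a f.
Proof. by apply/eqP; rewrite -addr_eq0 -actDr addNr act0r. Qed.
Lemma act_sumr a I (r : seq I) (P : pred I) (F : I -> H) :
  act a (\sum_(i <- r | P i) F i) = \sum_(i <- r | P i) act a (F i).
Proof. exact: (big_morph _ (actDr a) (act0r a)). Qed.
Lemma act_suml f I (r : seq I) (P : pred I) (F : I -> 'M[C]_d) :
  act (\sum_(i <- r | P i) F i) f = \sum_(i <- r | P i) act (F i) f.
Proof. exact: (big_morph (fun a => act a f) (fun a b => actDl a b f) (act0l f)). Qed.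

Lemma adjmxK (a : 'M[C]_d) : adjmx (adjmx a) = a.
Proof. by apply/matrixP => i j; rewrite !mxE conjCK. Qed.
Lemma adjmxM (a b : 'M[C]_d) : adjmx (a *m b) = adjmx b *m adjmx a.
Proof. by rewrite /adjmx map_mxM trmx_mul. Qed.
Lemma adjmxD (a b : 'M[C]_d) : adjmx (a + b) = adjmx a + adjmx b.
Proof. by apply/matrixP => i j; rewrite !mxE rmorphD. Qed.
Lemma adjmx0 : adjmx (0 : 'M[C]_d) = 0.
Proof. by apply/matrixP => i j; rewrite !mxE rmorph0. Qed.
Lemma adjmx_scalar (c : C) : adjmx (c%:M : 'M[C]_d) = (c^*)%:M.
Proof. by apply/matrixP => i j; rewrite !mxE rmorphMn eq_sym. Qed.
Lemma adjmx_delta (i j : 'I_d) : adjmx (delta_mx i j : 'M[C]_d) = delta_mx j i.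
Proof. by apply/matrixP => k l; rewrite !mxE rmorph_nat andbC. Qed.
Lemma adjmx00 (a : 'M[C]_d) : adjmx a 0 0 = (a 0 0)^*.
Proof. by rewrite !mxE. Qed.

Lemma ip0l g : ip 0 g = 0.
Proof. apply: (@addrI _ (ip 0 g)); by rewrite -ipDl !addr0. Qed.
Lemma ipDr f g h : ip f (g + h) = ip f g + ip f h.
Proof. by rewrite ipC ipDl adjmxD -!ipC. Qed.
Lemma ip0r f : ip f 0 = 0.
Proof. by rewrite ipC ip0l adjmx0. Qed.
Lemma ipAr a f g : ip f (act a g) = ip f g *m adjmx a.
Proof. by rewrite ipC ipAl adjmxM -ipC. Qed.
Lemma ip_suml g I (r : seq I) (P : pred I) (F : I -> H) :
  ip (\sum_(i <- r | P i) F i) g = \sum_(i <- r | P i) ip (F i) g.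
Proof. exact: (big_morph (fun f => ip f g) (fun a b => ipDl a b g) (ip0l g)). Qed.
Lemma ip_sumr f I (r : seq I) (P : pred I) (F : I -> H) :
  ip f (\sum_(i <- r | P i) F i) = \sum_(i <- r | P i) ip f (F i).
Proof. exact: (big_morph (fun g => ip f g) (ipDr f) (ip0r f)). Qed.

Definition sc (c : C) (f : H) := act c%:M f.
Lemma scDl a b f : sc (a + b) f = sc a f + sc b f.
Proof. by rewrite /sc raddfD actDl. Qed.
Lemma scDr a f g : sc a (f + g) = sc a f + sc a g.
Proof. exact: actDr. Qed.
Lemma sc0l f : sc 0 f = 0.
Proof. by rewrite /sc raddf0 act0l. Qed.
Lemma sc0r a : sc a 0 = 0.
Proof. exact: act0r. Qed.
Lemma sc1 f : sc 1 f = f.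
Proof. exact: act1. Qed.
Lemma scA a b f : sc a (sc b f) = sc (a * b) f.
Proof. by rewrite /sc -actM -scalar_mxM. Qed.
Lemma act_sc a c f : act a (sc c f) = sc c (act a f).
Proof. by rewrite /sc -!actM scalar_mxC. Qed.
Lemma sc_sumr a I (r : seq I) (P : pred I) (F : I -> H) :
  sc a (\sum_(i <- r | P i) F i) = \sum_(i <- r | P i) sc a (F i).
Proof. exact: act_sumr. Qed.
Lemma sc_suml f I (r : seq I) (P : pred I) (F : I -> C) :
  sc (\sum_(i <- r | P i) F i) f = \sum_(i <- r | P i) sc (F i) f.
Proof. exact: (big_morph (fun a => sc a f) (fun a b => scDl a b f) (sc0l f)). Qed.

Definition dot (f g : H) : C := ip f g 0 0.
Lemma dotDl f g h : dot (f + g) h = dot f h + dot g h.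
Proof. by rewrite /dot ipDl mxE. Qed.
Lemma dotDr f g h : dot f (g + h) = dot f g + dot f h.
Proof. by rewrite /dot ipDr mxE. Qed.
Lemma dotC f g : dot g f = (dot f g)^*.
Proof. by rewrite /dot ipC adjmx00. Qed.
Lemma dotZl c f g : dot (sc c f) g = c * dot f g.
Proof. by rewrite /dot /sc ipAl mul_scalar_mx mxE. Qed.
Lemma dotZr c f g : dot f (sc c g) = dot f g * c^*.
Proof. by rewrite dotC dotZl rmorphM [dot f g]dotC mulrC. Qed.
Lemma dot0l g : dot 0 g = 0.
Proof. by rewrite /dot ip0l mxE. Qed.
Lemma dot0r g : dot g 0 = 0.
Proof. by rewrite /dot ip0r mxE. Qed.
Lemma dot_suml g I (r : seq I) (P : pred I) (F : I -> H) :
  dot (\sum_(i <- r | P i) F i) g = \sum_(i <- r | P i) dot (F i) g.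
Proof. by rewrite /dot ip_suml summxE. Qed.
Lemma dot_sumr f I (r : seq I) (P : pred I) (F : I -> H) :
  dot f (\sum_(i <- r | P i) F i) = \sum_(i <- r | P i) dot f (F i).
Proof. by rewrite /dot ip_sumr summxE. Qed.

Definition inK (x : H) := act (delta_mx 0 0) x = x.

Lemma inK0 : inK 0.
Proof. exact: act0r. Qed.
Lemma inKD x y : inK x -> inK y -> inK (x + y).
Proof. by rewrite /inK actDr => -> ->. Qed.
Lemma inKZ c x : inK x -> inK (sc c x).
Proof. by rewrite /inK act_sc => ->. Qed.
Lemma inK_sum I (r : seq I) (P : pred I) (F : I -> H) :
  (forall i, P i -> inK (F i)) -> inK (\sum_(i <- r | P i) F i).
Proof. move=> HF; elim/big_ind: _ => //; [exact: inK0 | exact: inKD]. Qed.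
Lemma inK_E0 i h : inK (act (delta_mx 0 i) h).
Proof. by rewrite /inK -actM mul_delta_mx. Qed.

Lemma ipK x y : inK x -> inK y -> ip x y = dot x y *: delta_mx 0 0.
Proof.
move=> Hx Hy; rewrite -{1}Hx -{1}Hy ipAl ipAr adjmx_delta mulmxA sandwich.
by [].
Qed.
Lemma inK_dot0 x : inK x -> dot x x = 0 -> x = 0.
Proof. by move=> Hx H0; apply: ip_eq0; rewrite ipK // H0 scale0r. Qed.
Lemma dot_ge0 f : 0 <= dot f f.
Proof.
case: (ip_psd f) => _ /(_ (delta_mx 0 0)).
by rewrite map_delta_mx trmx_delta sandwich !mxE !eqxx mulr1.
Qed.
Lemma tr_delta00 c : \tr (c *: delta_mx 0 0 : 'M[C]_d) = c.
Proof.
rewrite /mxtrace (bigD1 0) //= big1 ?addr0; first by rewrite !mxE eqxx mulr1.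
by move=> i /negPf ni; rewrite !mxE ni mulr0.
Qed.

Definition ortho r (w : 'I_r -> H) :=
  (forall p, inK (w p)) /\ forall p q, dot (w p) (w q) = (p == q)%:R.
Definition expand r (w : 'I_r -> H) z := \sum_(p < r) sc (dot z (w p)) (w p).
Definition inspan r (w : 'I_r -> H) z := z = expand w z.

Lemma expandD r (w : 'I_r -> H) y z : expand w (y + z) = expand w y + expand w z.
Proof. by rewrite /expand -big_split; apply: eq_bigr => p _; rewrite dotDl scDl. Qed.
Lemma expand0 r (w : 'I_r -> H) : expand w 0 = 0.
Proof. by rewrite /expand big1 // => p _; rewrite dot0l sc0l. Qed.
Lemma expandZ r (w : 'I_r -> H) c z : expand w (sc c z) = sc c (expand w z).
Proof. by rewrite /expand sc_sumr; apply: eq_bigr => p _; rewrite dotZl scA. Qed.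
Lemma inspanD r (w : 'I_r -> H) y z : inspan w y -> inspan w z -> inspan w (y + z).
Proof. by rewrite /inspan expandD => <- <-. Qed.
Lemma inspanZ r (w : 'I_r -> H) c z : inspan w z -> inspan w (sc c z).
Proof. by rewrite /inspan expandZ => <-. Qed.
Lemma inspan_sum r (w : 'I_r -> H) I (s : seq I) (P : pred I) (F : I -> H) :
  (forall i, P i -> inspan w (F i)) -> inspan w (\sum_(i <- s | P i) F i).
Proof.
move=> HF; elim/big_ind: _ => //; last exact: inspanD.
by rewrite /inspan expand0.
Qed.
Lemma inspan_inK r (w : 'I_r -> H) z : ortho w -> inspan w z -> inK z.
Proof. by move=> [Kw _] ->; apply: inK_sum => p _; apply: inKZ. Qed.
Lemma dot_expand_l r (w : 'I_r -> H) y z :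
  dot (expand w y) z = \sum_(p < r) dot y (w p) * dot (w p) z.
Proof. by rewrite /expand dot_suml; apply: eq_bigr => p _; rewrite dotZl. Qed.
Lemma dot_expand_w r (w : 'I_r -> H) y q : ortho w ->
  dot (expand w y) (w q) = dot y (w q).
Proof.
move=> [_ Ow]; rewrite dot_expand_l (bigD1 q) //= big1 ?addr0.
  by rewrite Ow eqxx mulr1.
by move=> p /negPf pq; rewrite Ow pq mulr0.
Qed.
Lemma dot_span_perp r (w : 'I_r -> H) y z :
  inspan w y -> (forall p, dot (w p) z = 0) -> dot y z = 0.
Proof.
by move=> -> Hz; rewrite dot_expand_l big1 // => p _; rewrite Hz mulr0.
Qed.

Lemma dotNl f g : dot (- f) g = - dot f g.
Proof. by apply/eqP; rewrite -addr_eq0 -dotDl addNr dot0l. Qed.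
Lemma inKN x : inK x -> inK (- x).
Proof. by rewrite /inK actNr => ->. Qed.

Lemma widen_lift r (p : 'I_r) : widen_ord (leqnSn r) p = lift ord_max p.
Proof. by apply: val_inj; rewrite /= /bump leqNgt ltn_ord. Qed.

Lemma gs_step r (w : 'I_r -> H) b : ortho w -> inK b ->
  exists r' (w' : 'I_r' -> H),
    [/\ ortho w', inspan w' b & forall y, inspan w y -> inspan w' y].
Proof.
move=> Ow Kb; set z := b - expand w b.
have Kexp y : inK (expand w y) by apply: inK_sum => p _; apply: inKZ; case: Ow.
have Kz : inK z by apply: inKD => //; apply/inKN.
have zw q : dot z (w q) = 0 by rewrite /z dotDl dotNl dot_expand_w // subrr.
have wz q : dot (w q) z = 0 by rewrite dotC zw rmorph0.
have [z0|zn0] := eqVneq (dot z z) 0.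
  exists r, w; split => //; rewrite /inspan.
  have /eqP := inK_dot0 Kz z0; rewrite subr_eq0 => /eqP //.
set s := sqrtC (dot z z).
have s_gt0 : 0 < s by rewrite sqrtC_gt0 lt_def zn0 dot_ge0.
have sn0 : s != 0 by rewrite gt_eqF.
have sR : s^-1^* = s^-1.
  by rewrite conj_Creal // rpredV ger0_real // ltW.
have ss : dot z z = s * s by rewrite -expr2 sqrtCK.
set u := sc s^-1 z.
have uu : dot u u = 1 by rewrite dotZl dotZr sR ss; field.
have uw q : dot u (w q) = 0 by rewrite dotZl zw mulr0.
have wu q : dot (w q) u = 0 by rewrite dotZr wz mul0r.
pose w' := fun p : 'I_r.+1 => if unlift ord_max p is Some q then w q else u.
exists r.+1, w'.
have expand' y : expand w' y = expand w y + sc (dot y u) u.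
  rewrite /expand big_ord_recr /=; congr (_ + _).
    by apply: eq_bigr => p _; rewrite widen_lift /w' liftK.
  by rewrite /w' unlift_none.
split.
- split.
    move=> p; rewrite /w'; case: (unliftP ord_max p) => [p' _|_].
      by case: Ow.
    by apply: inKZ.
  move=> p q; rewrite /w'.
  case: (unliftP ord_max p) => [p' ->|->]; case: (unliftP ord_max q) => [q' ->|->];
    rewrite ?liftK ?unlift_none.
  + by rewrite (inj_eq (@lift_inj _ ord_max)); case: Ow.
  + by rewrite wu eq_sym (negPf (neq_lift _ _)).
  + by rewrite uw (negPf (neq_lift _ _)).
  + by rewrite uu eqxx.
- rewrite /inspan expand'.
  have -> : dot b u = dot z z * s^-1.
    rewrite dotZr sR; congr (_ * _).
    have -> : b = z + expand w b by rewrite /z subrK.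
    rewrite dotDl dot_expand_l big1 ?addr0 // => p _.
    by rewrite wz mulr0.
  rewrite /u scA ss.
  have -> : s * s * s^-1 * s^-1 = 1 by field.
  by rewrite sc1 /z addrC subrK.
- move=> y Hy; rewrite /inspan expand' (dot_span_perp Hy wu) sc0l addr0.
  exact: Hy.
Qed.


Lemma gram (s : seq H) : (forall b, b \in s -> inK b) ->
  exists r (w : 'I_r -> H), ortho w /\ forall b, b \in s -> inspan w b.
Proof.
elim: s => [|b s IH] Hs.
  by exists 0%N, (fun _ => 0); split; [split; case|].
have [r [w [Ow Hw]]] : exists r (w : 'I_r -> H), ortho w /\ forall b, b \in s -> inspan w b.
  by apply: IH => b' hb'; apply: Hs; rewrite inE hb' orbT.
have [r' [w' [Ow' Hb Hy]]] := gs_step Ow (Hs b (mem_head _ _)).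
exists r', w'; split => // y; rewrite inE => /orP [/eqP -> // | /Hw /Hy //].
Qed.

Section Q.
Variables (r : nat) (lam : 'I_r -> R) (v : 'I_r -> H).
Definition Qf h := \sum_(k < r) act (((lam k)%:C)%C%:M) (odot act ip (v k) (v k) h).
Lemma Q_act a h : Qf (act a h) = act a (Qf h).
Proof.
rewrite /Qf act_sumr; apply: eq_bigr => k _.
by rewrite /odot ipAl -!actM !mulmxA scalar_mxC.
Qed.
Lemma Q_add f g : Qf (f + g) = Qf f + Qf g.
Proof. by rewrite /Qf -big_split; apply: eq_bigr => k _; rewrite /odot ipDl actDl actDr. Qed.
Lemma Q0 : Qf 0 = 0.
Proof. by rewrite /Qf big1 // => k _; rewrite /odot ip0l act0l act0r. Qed.
Lemma Q_sum I (s : seq I) (P : pred I) (F : I -> H) :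
  Qf (\sum_(i <- s | P i) F i) = \sum_(i <- s | P i) Qf (F i).
Proof. exact: (big_morph Qf Q_add Q0). Qed.
Lemma Q_K x : ortho v -> inK x ->
  Qf x = \sum_(k < r) sc (((lam k)%:C)%C * dot x (v k)) (v k).
Proof.
move=> [Kv _] Kx; apply: eq_bigr => k _.
rewrite /odot ipK // -mul_scalar_mx actM (Kv k) -/(sc _ _) -/(sc _ _) scA //.
Qed.
End Q.

Lemma decomp h : h = \sum_(i < d) act (delta_mx i 0) (act (delta_mx 0 i) h).
Proof.
under eq_bigr do rewrite -actM mul_delta_mx.
by rewrite -act_suml -mx1_sum_delta act1.
Qed.

Variables (S : H -> H) (n : nat) (fs gs : 'I_n -> H).
Hypothesis hSdef : forall h, S h = \sum_(k < n) odot act ip (fs k) (gs k) h.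
Hypothesis hsa : self_adjoint ip S.

Lemma S_act a h : S (act a h) = act a (S h).
Proof. by rewrite !hSdef act_sumr; apply: eq_bigr => k _; rewrite /odot ipAl actM. Qed.
Lemma S_add f g : S (f + g) = S f + S g.
Proof. by rewrite !hSdef -big_split; apply: eq_bigr => k _; rewrite /odot ipDl actDl. Qed.
Lemma S0 : S 0 = 0.
Proof. by rewrite hSdef big1 // => k _; rewrite /odot ip0l act0l. Qed.
Lemma S_sum I (r : seq I) (P : pred I) (F : I -> H) :
  S (\sum_(i <- r | P i) F i) = \sum_(i <- r | P i) S (F i).
Proof. exact: (big_morph S S_add S0). Qed.
Lemma S_K x : inK x -> inK (S x).
Proof. by rewrite /inK -S_act => ->. Qed.
Lemma S_sa x y : inK x -> inK y -> dot (S x) y = dot x (S y).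
Proof. move=> Kx Ky; have KSx := S_K Kx; have KSy := S_K Ky; have := hsa x y; rewrite !ipK // => E. by rewrite -[LHS]tr_delta00 -[RHS]tr_delta00; exact: E. Qed.

Lemma E00M (M : 'M[C]_d) : (delta_mx 0 0 : 'M[C]_d) *m M = \sum_j (M 0 j)%:M *m (delta_mx 0 j : 'M[C]_d).
Proof.
rewrite mul_delta_l; apply/matrixP => a b; rewrite !mxE summxE (bigD1 b) //= big1 ?addr0.
  by rewrite mul_scalar_mx !mxE eqxx andbT mulrC.
by move=> j /negPf jb; rewrite mul_scalar_mx !mxE [b == j]eq_sym jb andbF mulr0.
Qed.

Definition bs := [seq act (delta_mx 0 j) (fs k) | k <- enum 'I_n, j <- enum 'I_d].

Lemma bs_K b : b \in bs -> inK b.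
Proof. by case/allpairsP => -[k j] [_ _ ->]; apply: inK_E0. Qed.

Lemma S_span r (w : 'I_r -> H) : (forall b, b \in bs -> inspan w b) ->
  forall x, inK x -> inspan w (S x).
Proof.
move=> Hw x Kx; rewrite -(S_K Kx) hSdef act_sumr.
apply: inspan_sum => k _; rewrite /odot -actM E00M act_suml.
apply: inspan_sum => j _; rewrite actM; apply: inspanZ; apply: Hw.
by apply: allpairs_f; rewrite mem_enum.
Qed.

Lemma core : exists r (lam : 'I_r -> R) (v : 'I_r -> H), ortho v /\
  forall x, inK x -> S x = \sum_(k < r) sc ((lam k)%:C%C * dot x (v k)) (v k).
Proof.
have [r [w [Ow Hw]]] := gram bs_K.
have Sspan := S_span Hw.
have Kw p : inK (w p) by case: Ow.
pose T := \matrix_(p, q) dot (S (w q)) (w p) : 'M[C]_r.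
have Therm' p q : T p q = (T q p)^*.
  by rewrite !mxE -dotC S_sa.
have Therm : T \is hermsymmx.
  by rewrite is_hermitianmxE expr0 scale1r; apply/eqP/matrixP => p q; rewrite !mxE -dotC S_sa.
have /orthomx_spectralP Tdec := hermitian_normalmx Therm.
have Lreal := hermitian_spectral_diag_real Therm.
set P := spectralmx T in Tdec; set L := spectral_diag T in Tdec Lreal.
have Pu : P \is unitarymx := spectral_unitarymx T.
rewrite invmx_unitary // in Tdec.
have Tpq p q : T p q = \sum_k (P k p)^* * L 0 k * P k q.
  by rewrite {1}Tdec mul_mx_diag !mxE; apply: eq_bigr => k _; rewrite !mxE.
have Pu' k j : \sum_p P k p * (P j p)^* = (k == j)%:R.
  have := unitarymxP Pu; move/matrixP/(_ k j); rewrite !mxE => <-.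
  by apply: eq_bigr => p _; rewrite !mxE.
have Lr k : (L 0 k)^* = L 0 k.
  by apply: conj_Creal; move/mxOverP: Lreal; apply.
pose lam k := complex.Re (L 0 k).
have lamE k : (lam k)%:C%C = L 0 k by apply: Creal_C.
pose v k := \sum_p sc ((P k p)^*) (w p).
have wv p k : dot (w p) (v k) = P k p.
  rewrite dot_sumr (bigD1 p) //= big1 ?addr0.
    by rewrite dotZr (proj2 Ow) eqxx mul1r conjCK.
  by move=> q /negPf qp; rewrite dotZr (proj2 Ow) eq_sym qp mul0r.
have xv x k : dot x (v k) = \sum_p dot x (w p) * P k p.
  by rewrite dot_sumr; apply: eq_bigr => p _; rewrite dotZr conjCK.
exists r, lam, v; split.
  split.
    by move=> k; apply: inK_sum => p _; apply: inKZ.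
  move=> j k; rewrite dot_suml.
  transitivity (\sum_p P k p * (P j p)^*); last by rewrite Pu' eq_sym.
  by apply: eq_bigr => p _; rewrite dotZl wv mulrC.
move=> x Kx.
have LHS p : dot (S x) (w p) = \sum_q dot x (w q) * T p q.
  rewrite S_sa // {1}(Sspan _ (Kw p)) /expand dot_sumr.
  by apply: eq_bigr => q _; rewrite dotZr Therm' mxE.
rewrite {1}(Sspan _ Kx) /expand.
under eq_bigr do rewrite LHS.
rewrite /v; under [RHS]eq_bigr do rewrite sc_sumr.
rewrite [RHS]exchange_big /=; apply: eq_bigr => p _.
under [RHS]eq_bigr do rewrite scA. rewrite -sc_suml; congr (sc _ _).
under [RHS]eq_bigr do rewrite lamE xv.
under eq_bigr do rewrite Tpq mulr_sumr.
rewrite exchange_big /=; apply: eq_bigr => k _.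
rewrite mulr_sumr mulr_suml; apply: eq_bigr => q _.
ring.
Qed.

Lemma main_d : exists (r : nat) (lam : 'I_r -> R) (f : 'I_r -> H),
    modular_orthonormal ip f /\
    forall h : H, S h = \sum_(k < r) act ((lam k)%:C%C)%:M (odot act ip (f k) (f k) h).
Proof.
have [r [lam [v [[Kv Ov] Hx]]]] := core.
exists r, lam, v; split.
  split.
    by move=> j k jk; rewrite ipK // Ov (negPf jk) scale0r.
  move=> k; rewrite ipK // Ov eqxx scale1r; split; first exact: mul_delta_mx.
  by split; [exact: adjmx_delta | exact: mxrank_delta].
move=> h; rewrite -/(Qf lam v h) {1}(decomp h) S_sum [in RHS](decomp h) Q_sum.
apply: eq_bigr => i _; rewrite S_act Q_act; congr act.
by rewrite Q_K ?Hx //; apply: inK_E0.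
Qed.
End Core.

Local Open Scope complex_scope.

Theorem lemma2 (R : realType) (d : nat) (H : zmodType)
    (act : 'M[R[i]]_d -> H -> H) (ip : H -> H -> 'M[R[i]]_d)
    (hH : hilbert_module act ip)
    (S : H -> H) (hS : in_finite_rank act ip S) (hsa : self_adjoint ip S) :
  exists (n : nat) (lam : 'I_n -> R) (f : 'I_n -> H),
    modular_orthonormal ip f /\
    forall h : H, S h = \sum_(k < n) act ((lam k)%:C)%:M (odot act ip (f k) (f k) h).
Proof.
move: act ip hH S hS hsa; case: d => [|d'] act ip hH S hS hsa.
  have z0 (f : H) : f = 0.
    case: hH => _ [_ [_ [_ [_ [H1 _]]]]]; case: (H1 f) => + _; apply.
    exact: flatmx0.
  exists 0%N, (fun _ => 0), (fun _ => 0); split; first by split; case.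
  by move=> h; rewrite big_ord0; apply: z0.
case: hS => n [fs [gs hSdef]].
exact: (main_d hH hSdef hsa).
Qed.
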